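(* Let $(\mathcal{R},\mu)$ be resonant, let $\|\cdot\|_X$ be an r.i. quasi-Banach function norm on $\mathcal{M}(\mathcal{R},\mu)$ with corresponding space $X$, and let $\|\cdot\|_{\overline{X}}$ be the r.i. quasi-Banach function norm on $\mathcal{M}([0,\infty),\lambda)$ constructed as in the context, with corresponding space $\overline{X}$. Assume that $L^1\cap L^\infty\hookrightarrow X$ (over $(\mathcal{R},\mu)$) and that there exists $f_0\in\overline{X}$ with $f_0^*(0)=\infty$. Then $L^1\cap L^\infty\subseteq X_a$.
   Context: Let $(\mathcal{R},\mu)$ be a $\sigma$-finite measure space; $\mathcal{M}$ denotes the $\mu$-measurable extended complex-valued functions (identified a.e.), $\mathcal{M}_+$ the non-negative ones. $f_*(s)=\mu(\{|f|>s\})$, $f^*(t)=\inf\{s\ge0;\,f_*(s)\le t\}$ (non-increasing rearrangement). $(\mathcal{R},\mu)$ is called resonant if it is either non-atomic or completely atomic with all atoms of equal measure. A quasi-Banach function norm is a map $\|\cdot\|:\mathcal{M}\to[0,\infty]$ with $\|f\|=\||f|\|$ such that on $\mathcal{M}_+$: (Q1) $\|af\|=|a|\|f\|$, $\|f\|=0\iff f=0$ a.e., and there is $C\ge1$ (modulus of concavity) with $\|f+g\|\le C(\|f\|+\|g\|)$; (P2) $f\le g$ a.e. implies $\|f\|\le\|g\|$; (P3) $f_n\uparrow f$ a.e. implies $\|f_n\|\uparrow\|f\|$; (P4) $\|\chi_E\|<\infty$ whenever $\mu(E)<\infty$. The norm is rearrangement-invariant (r.i.) if $\|f\|=\|g\|$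 whenever $f^*=g^*$. The corresponding space is $X=\{f\in\mathcal{M};\,\|f\|_X<\infty\}$. A function $f\in X$ has absolutely continuous quasinorm if $\|f\chi_{E_k}\|_X\to0$ for every sequence of measurable sets $E_k$ with $\chi_{E_k}\to0$ a.e.; $X_a$ denotes the set of such functions. $L^1\cap L^\infty$ is the space with norm $\|f\|_{L^1\cap L^\infty}=f^*(0)+\int_0^\infty f^*\,d\lambda$; $Y\hookrightarrow X$ means $Y\subseteq X$ with continuous inclusion. Construction of $\|\cdot\|_{\overline{X}}$: (i) If $(\mathcal{R},\mu)$ is non-atomic, fix a measure-preserving map $\sigma$ from $(\mathcal{R},\mu)$ onto $[0,\mu(\mathcal{R}))$ (with Lebesgue measure $\lambda$), and for $h\in\mathcal{M}([0,\mu(\mathcal{R})),\lambda)$ put $\|h\|_{\overline{X_0}}=\|h\circ\sigma\|_X$. (ii) If $(\mathcal{R},\mu)$ is completely atomic with all atoms of measure $\beta\in(0,\infty)$, fix an enumeration $(e_n)_{n\in\mathcal{N}}$ of the atoms, $\mathcal{N}=\{n\in\mathbb{N};\,\beta n<\mu(\mathcal{R})\}$ ($0\in\mathbb{N}$), define $T(h)(e_n)=\beta^{-1}\int_{\beta n}^{\beta(n+1)}h^*\,d\lambda$ for $n\in\mathcal{N}$, and put $\|h\|_{\overline{X_0}}=\|T(h)\|_X$. In both cases define, for $f\in\mathcal{M}([0,\infty),\lambda)$, $\|f\|_{\overline{X}}=\|f^*\chi_{[0,\mu(\mathcal{R}))}\|_{\overline{X_0}}$. (This is an r.i. quasi-Banach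 function norm with $\|f\|_X=\|f^*\|_{\overline{X}}$ for $f\in\mathcal{M}(\mathcal{R},\mu)$.) *)

(* Defs.v *)
From HB Require Import structures.
From mathcomp Require Import all_boot all_order all_algebra.
From mathcomp Require Import all_classical all_reals all_analysis.
From mathcomp Require Import measurable_realfun.
Set Implicit Arguments. Unset Strict Implicit. Unset Printing Implicit Defensive.
Import Order.TTheory GRing.Theory Num.Theory.
Import numFieldNormedType.Exports.
Local Open Scope classical_set_scope.
Local Open Scope ring_scope.
Local Open Scope ereal_scope.

Section Defs.
Context {R : realType}.

Definition distf d (T : measurableType d) (mu : set T -> \bar R) (D : set T)
  (f : T -> \bar R) (s : R) : \bar R :=
  mu (D `&` [set x | s%:E < `| f x |]).

Definition rearr d (T : measurableType d) (mu : set T -> \bar R) (D : set T)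
  (f : T -> \bar R) (t : R) : \bar R :=
  ereal_inf [set s%:E | s in [set s : R | (0 <= s)%R /\ distf mu D f s <= t%:E]].

Definition Rplus : set R := [set x : R | (0 <= x)%R].
Definition rearrL (f : R -> \bar R) (t : R) : \bar R :=
  rearr (@lebesgue_measure R) Rplus f t.

Definition Mplus d (T : measurableType d) (f : T -> \bar R) : Prop :=
  measurable_fun setT f /\ forall x, 0 <= f x.

(* quasi-Banach function norm, given by its values on M_+ *)
Definition qBFN d (T : measurableType d) (mu : {measure set T -> \bar R})
  (N : (T -> \bar R) -> \bar R) : Prop :=
  (forall f, Mplus f -> 0 <= N f) /\
  (forall (a : R) f, Mplus f -> (0 <= a)%R -> N (fun x => a%:E * f x) = a%:E * N f) /\
  (forall f, Mplus f -> (N f = 0 <-> {ae mu, forall x, f x = 0})) /\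
  (exists C : R, (1 <= C)%R /\
     forall f g, Mplus f -> Mplus g -> N (f \+ g) <= C%:E * (N f + N g)) /\
  (forall f g, Mplus f -> Mplus g -> {ae mu, forall x, f x <= g x} -> N f <= N g) /\
  (forall (F : nat -> T -> \bar R) f, (forall n, Mplus (F n)) -> Mplus f ->
     {ae mu, forall x, {homo (fun n => F n x) : n m / (n <= m)%N >-> n <= m}
                       /\ (fun n => F n x) @ \oo --> f x} ->
     (fun n => N (F n)) @ \oo --> N f) /\
  (forall E, measurable E -> mu E < +oo -> N (fun x => (\1_E x)%:E) < +oo).

Definition ri d (T : measurableType d) (mu : {measure set T -> \bar R})
  (N : (T -> \bar R) -> \bar R) : Prop :=
  forall f g, Mplus f -> Mplus g ->
    (forall t : R, (0 <= t)%R -> rearr mu setT f t = rearr mu setT g t) ->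
    N f = N g.

Definition atom d (T : measurableType d) (mu : {measure set T -> \bar R})
  (A : set T) : Prop :=
  measurable A /\ 0 < mu A /\
  forall B, measurable B -> B `<=` A -> mu B = 0 \/ mu (A `\` B) = 0.

Definition nonatomic d (T : measurableType d) (mu : {measure set T -> \bar R}) :=
  forall A, ~ atom mu A.

Definition Imu d (T : measurableType d) (mu : {measure set T -> \bar R}) : set R :=
  [set t : R | (0 <= t)%R /\ t%:E < mu setT].

Definition meas_pres d (T : measurableType d) (mu : {measure set T -> \bar R})
  (sigma : T -> R) : Prop :=
  measurable_fun setT sigma /\ (forall x, Imu mu (sigma x)) /\
  forall A : set R, measurable A -> A `<=` Imu mu ->
    mu (sigma @^-1` A) = (@lebesgue_measure R) A.

Definition Nidx d (T : measurableType d) (mu : {measure set T -> \bar R})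
  (beta : R) (n : nat) : bool := (beta * n%:R)%:E < mu setT.

Definition atomic_enum d (T : measurableType d) (mu : {measure set T -> \bar R})
  (beta : R) (e : nat -> set T) : Prop :=
  (0 < beta)%R /\
  (forall n, Nidx mu beta n -> atom mu (e n) /\ mu (e n) = beta%:E) /\
  (forall n m, Nidx mu beta n -> Nidx mu beta m -> n <> m -> e n `&` e m = set0) /\
  mu (~` \bigcup_(n in [set n | Nidx mu beta n]) e n) = 0.

Definition cutrearr d (T : measurableType d) (mu : {measure set T -> \bar R})
  (f : R -> \bar R) : R -> \bar R :=
  fun t => rearrL f t * (\1_(Imu mu) t)%:E.

Definition Xbar_nonatomic d (T : measurableType d) (mu : {measure set T -> \bar R})
  (N : (T -> \bar R) -> \bar R) (sigma : T -> R) : (R -> \bar R) -> \bar R :=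
  fun f => N (fun x => cutrearr mu f (sigma x)).

Definition Top d (T : measurableType d) (mu : {measure set T -> \bar R})
  (beta : R) (e : nat -> set T) (h : R -> \bar R) : T -> \bar R :=
  fun x => \sum_(0 <= n <oo | Nidx mu beta n)
     ((\1_(e n) x)%:E * ((beta^-1)%:E *
       \int[@lebesgue_measure R]_(t in `[(beta * n%:R)%R, (beta * n.+1%:R)%R]%classic)
          rearrL h t)).

Definition Xbar_atomic d (T : measurableType d) (mu : {measure set T -> \bar R})
  (N : (T -> \bar R) -> \bar R) (beta : R) (e : nat -> set T) :
  (R -> \bar R) -> \bar R :=
  fun f => N (Top mu beta e (cutrearr mu f)).

Definition L1Linf d (T : measurableType d) (mu : {measure set T -> \bar R})
  (f : T -> \bar R) : \bar R :=
  rearr mu setT f 0 + \int[@lebesgue_measure R]_(t in Rplus) rearr mu setT f t.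

End Defs.

(* Main.v *)
Require Import Defs.
From HB Require Import structures.
From mathcomp Require Import all_boot all_order all_algebra.
From mathcomp Require Import all_classical all_reals all_analysis.
From mathcomp Require Import measurable_realfun.
From mathcomp Require Import ring lra.
Import Order.TTheory GRing.Theory Num.Theory.
Import numFieldNormedType.Exports.
Local Open Scope classical_set_scope.
Local Open Scope ring_scope.
Local Open Scope ereal_scope.
Section Aux.
Context {R : realType} d (T : measurableType d) (mu : {measure set T -> \bar R}).

Lemma rearr_ge0 D (f : T -> \bar R) t : 0 <= rearr mu D f t.
Proof. by apply: le_ereal_inf_tmp => _ [s [s0 _] <-]; rewrite lee_fin. Qed.

Lemma rearr_noninc D (f : T -> \bar R) t1 t2 : (t1 <= t2)%R ->
  rearr mu D f t2 <= rearr mu D f t1.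
Proof.
move=> t12; apply: ereal_inf_le_tmp => _ [s [s0 ds] <-]; exists s => //.
by split => //; apply: le_trans ds _; rewrite lee_fin.
Qed.

Lemma distf_noninc D (f : T -> \bar R) s1 s2 : measurable D ->
  measurable_fun D f -> (s1 <= s2)%R -> distf mu D f s2 <= distf mu D f s1.
Proof.
move=> mD mf s12; have maf : measurable_fun D (abse \o f).
  exact: measurableT_comp (@abse_measurable R setT) mf.
apply: le_measure; rewrite ?inE.
- exact: (emeasurable_fun_o_infty mD maf).
- exact: (emeasurable_fun_o_infty mD maf).
by move=> x [Dx /= h]; split => //; apply: le_lt_trans h; rewrite lee_fin.
Qed.

Lemma distf_rearr D (f g : T -> \bar R) : distf mu D f = distf mu D g ->
  rearr mu D f = rearr mu D g.
Proof. by rewrite /rearr => ->. Qed.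

Lemma rearr_le_cst D (f : T -> \bar R) (s t : R) : (0 <= s)%R ->
  distf mu D f s <= t%:E -> rearr mu D f t <= s%:E.
Proof. by move=> s0 h; apply: ereal_inf_lbound; exists s. Qed.

Lemma rearr_lt D (f : T -> \bar R) (t : R) x : rearr mu D f t < x ->
  exists s : R, [/\ (0 <= s)%R, distf mu D f s <= t%:E & s%:E < x].
Proof. by move=> /ereal_inf_lt[_ [s [s0 ds] <-] sx]; exists s. Qed.

End Aux.

Lemma noninc_emeas {R : realType} (phi : R -> \bar R) :
  (forall a b : R, (a <= b)%R -> phi b <= phi a) -> measurable_fun setT phi.
Proof.
move=> hphi; apply: (measurability _ (ErealGenOInfty.measurableE R)).
move=> /= _ [_ [a ->]] <-; apply: measurableI => //.
apply: is_interval_measurable => s t /=.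
rewrite !in_itv/= !andbT => fs ft u /andP[su ut].
by rewrite in_itv/= andbT (lt_le_trans ft)// hphi.
Qed.
Section Aux2.
Context {R : realType} d (T : measurableType d) (mu : {measure set T -> \bar R}).

Lemma Mplus_indic (B : set T) : measurable B -> Mplus (fun x => (\1_B x)%:E : \bar R).
Proof.
move=> mB; split; last by move=> x; rewrite lee_fin.
by apply/measurable_EFinP; exact: measurable_indic.
Qed.

Lemma Mplus_mulindic (f : T -> \bar R) (B : set T) : Mplus f -> measurable B ->
  Mplus (fun x => f x * (\1_B x)%:E).
Proof.
move=> [mf f0] mB; split.
  by apply: emeasurable_funM => //; apply/measurable_EFinP; exact: measurable_indic.
by move=> x; apply: mule_ge0 => //; rewrite lee_fin.
Qed.

Lemma atomic_small beta e : atomic_enum mu beta e ->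
  forall B, measurable B -> mu B < beta%:E -> mu B = 0.
Proof.
move=> [b0 [hat [_ hU]]] B mB Bb.
pose U := \bigcup_(n in [set n | Nidx mu beta n]) e n.
have mU : measurable U.
  by apply: bigcup_measurable => n /= hn; exact: (hat n hn).1.1.
pose G k := if Nidx mu beta k then e k `&` B else set0.
have negG k : mu.-negligible (G k).
  rewrite /G; case: ifPn => hk; last exact: negligible_set0.
  have [[me [_ hatom]] mek] := hat k hk.
  apply/negligibleP; first exact: measurableI.
  have [//|h] := hatom (e k `&` B) (measurableI _ _ me mB) (@subIsetl _ _ _).
  exfalso; have hb : mu (e k) = mu (e k `\` (e k `&` B)) + mu (e k `&` (e k `&` B)).
    by apply: measureDI => //; exact: measurableI.
  rewrite h add0e mek in hb; have : mu (e k `&` (e k `&` B)) <= mu B.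
    apply: le_measure; rewrite ?inE //; last by move=> x [_ [_]].
    by apply: measurableI => //; exact: measurableI.
  by rewrite -hb => /(lt_le_trans Bb); rewrite ltxx.
apply/eqP; rewrite -measure_le0.
have : mu.-negligible B.
  apply: (@negligibleS _ _ _ _ ((~` U) `|` \bigcup_k G k)).
    move=> x Bx; have [Ux|nUx] := pselect (U x); last by left.
    right; case: Ux => n hn enx; exists n => //; rewrite /G.
    by move: hn; rewrite /= => ->.
  apply: negligibleU; last exact: negligible_bigcup.
  by apply/negligibleP => //; exact: measurableC.
by move/negligibleP => /(_ mB) ->.
Qed.

End Aux2.
Lemma RplusE {R : realType} : (Rplus : set R) = `[0%R, +oo[%classic.
Proof. by apply/seteqP; split => x; rewrite /Rplus /= in_itv andbT. Qed.

Lemma measurable_Rplus {R : realType} : measurable (Rplus : set R).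
Proof. by rewrite RplusE. Qed.

Lemma abs_indicE {R : realType} T (B : set T) x :
  `|(\1_B x)%:E| = ((\1_B x)%:E : \bar R).
Proof. by rewrite /= ger0_norm. Qed.

Lemma distf_indic {R : realType} d (T : measurableType d)
  (mu : {measure set T -> \bar R}) (B : set T) (s : R) :
  distf mu setT (fun x => (\1_B x)%:E) s =
  if (s < 0)%R then mu setT else if (s < 1)%R then mu B else 0.
Proof.
rewrite /distf; case: ifPn => s0.
  congr (mu _); apply/seteqP; split => x //= _; split => //.
  by rewrite ?abs_indicE ?ger0_norm// lte_fin (lt_le_trans s0).
case: ifPn => s1.
  congr (mu _); apply/seteqP; split => x /=.
    move=> [_]; rewrite ?abs_indicE ?ger0_norm// lte_fin /indic.
    case: (boolP (x \in B)) => [/set_mem //|_] /= h; exfalso; rewrite -leNgt in s0; lra.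
  by move=> Bx; split => //; rewrite ?abs_indicE ?ger0_norm// lte_fin indicE mem_set.
rewrite (_ : _ `&` _ = set0) ?measure0//; apply/seteqP; split => x //= [_].
rewrite ?abs_indicE ?ger0_norm// lte_fin /indic.
rewrite -leNgt in s0; rewrite -leNgt in s1.
by case: (x \in B) => /= h; lra.
Qed.

Lemma rearrL_blowup {R : realType} (f0 : R -> \bar R) :
  measurable_fun Rplus f0 -> rearrL f0 0 = +oo ->
  forall K : R, (0 <= K)%R ->
  exists2 delta : R, (0 < delta)%R &
    forall t : R, (0 <= t)%R -> (t < delta)%R -> K%:E <= rearrL f0 t.
Proof.
move=> mf0 f00 K K0; apply: contrapT => hneg.
suff : rearrL f0 0 <= K%:E by rewrite f00 leye_eq.
apply: rearr_le_cst => //.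
apply/lee_addgt0Pr => e e0; rewrite add0e.
have /existsNP [t ht] : ~ forall t : R, (0 <= t)%R -> (t < e)%R -> K%:E <= rearrL f0 t.
  by move=> h; apply: hneg; exists e.
move: ht => /not_implyP [t0 /not_implyP [te /negP]]; rewrite -ltNge => /rearr_lt [s [s0 ds sK]].
move: sK; rewrite lte_fin => sK.
apply: le_trans (@distf_noninc R _ _ (@lebesgue_measure R) Rplus f0 s K measurable_Rplus mf0 (ltW sK)) _.
by apply: le_trans ds _; rewrite lee_fin ltW.
Qed.
Lemma nonatomic_small {R : realType} d (T : measurableType d)
  (mu : {measure set T -> \bar R}) (N : (T -> \bar R) -> \bar R) sigma
  (f0 : R -> \bar R) :
  qBFN mu N -> ri mu N -> meas_pres mu sigma -> measurable_fun Rplus f0 ->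
  Xbar_nonatomic mu N sigma f0 < +oo -> rearrL f0 0 = +oo ->
  forall eta : R, (0 < eta)%R -> exists2 delta : R, (0 < delta)%R &
   forall B, measurable B -> mu B < delta%:E ->
     N (fun x => (\1_B x)%:E) <= eta%:E.
Proof.
move=> [N0 [NZ [Nae [_ [Nmono _]]]]] Nri [msig [sigI sigP]] mf0 Nfin f00 eta eta0.
set g := fun x => rearrL f0 (sigma x).
have gE : (fun x => cutrearr mu f0 (sigma x)) = g.
  by apply/funext => x; rewrite /cutrearr indicE (mem_set (sigI x)) mule1.
have Mg : Mplus g.
  split; last by move=> x; exact: rearr_ge0.
  apply: (measurableT_comp (f := rearrL f0)) => //.
  by apply: noninc_emeas => a b ab; exact: rearr_noninc.
have Ngfin : N g < +oo by move: Nfin; rewrite /Xbar_nonatomic gE.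
set Ng := fine (N g).
have Ng0 : (0 <= Ng)%R by rewrite fine_ge0 // N0.
have NgE : N g = Ng%:E by rewrite fineK // ge0_fin_numE // N0.
set K := ((Ng + 1) / eta)%R.
have K0 : (0 < K)%R by apply: divr_gt0 => //; lra.
have [delta delta0 hdelta] := @rearrL_blowup R f0 mf0 f00 K (ltW K0).
exists delta => // B mB Bd.
have Bfin : mu B \is a fin_num.
  by rewrite ge0_fin_numE ?measure_ge0// (lt_trans Bd) ?ltry.
set a := fine (mu B).
have a0 : (0 <= a)%R by rewrite fine_ge0 ?measure_ge0.
have muBa : mu B = a%:E by rewrite fineK.
have ad : (a < delta)%R by rewrite -lte_fin -muBa.
set A := sigma @^-1` `[0%R, a[%classic.
have itvI : `[0%R, a[%classic `<=` Imu mu.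
  move=> t /=; rewrite in_itv /= => /andP [t0 ta]; split => //.
  apply: lt_le_trans (_ : a%:E <= mu setT); first by rewrite lte_fin.
  by rewrite -muBa; apply: le_measure; rewrite ?inE.
have mA : measurable A.
  by have := msig measurableT _ (measurable_itv `[0%R, a[); rewrite setTI.
have muA : mu A = a%:E.
  rewrite /A sigP // lebesgue_measure_itv /= lte_fin.
  case: ltP => [_|a0']; first by rewrite oppr0 adde0.
  by have -> : a = 0%R by apply: le_anti; rewrite a0' a0.
have NBA : N (fun x => (\1_B x)%:E) = N (fun x => (\1_A x)%:E).
  have hd : distf mu setT (fun x => (\1_B x)%:E) = distf mu setT (fun x => (\1_A x)%:E).
    by apply/funext => s; rewrite !distf_indic muBa muA.
  apply: Nri; try exact: Mplus_indic.
  by move=> t _; rewrite /rearr hd.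
have MK : Mplus (fun x => K%:E * (\1_A x)%:E).
  apply: (@Mplus_mulindic R d T (fun _ => K%:E) A) => //; split.
    exact: measurable_cst.
  by move=> _ /=; rewrite lee_fin ltW.
have KA : N (fun x => K%:E * (\1_A x)%:E) <= N g.
  apply: Nmono => //; apply: aeW => x; rewrite /indic.
  case: (boolP (x \in A)) => [/set_mem xA|_]; last by rewrite mule0; exact: rearr_ge0.
  rewrite mule1; move: xA; rewrite /A /= in_itv /= => /andP [s0 sa].
  by apply: hdelta => //; exact: lt_trans sa ad.
rewrite NBA; apply: le_trans (_ : _ <= (K^-1 * Ng)%:E) _.
  rewrite EFinM lee_pdivlMl // -NZ //; [by rewrite -NgE|exact: Mplus_indic|exact: ltW].
rewrite lee_fin /K invf_div mulrAC ler_pdivrMr; last lra.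
nra.
Qed.
Lemma cvge0_eps {R : realType} (u : nat -> \bar R) : (forall n, 0 <= u n) ->
  (forall eta : R, (0 < eta)%R -> \forall n \near \oo, u n <= eta%:E) ->
  u @ \oo --> 0.
Proof.
move=> u0 h; apply/(@fine_cvgP _ _ _ _ u 0%R); split.
  near=> n.
  have un : u n <= 1%:E by near: n; exact: h.
  by rewrite ge0_fin_numE // (le_lt_trans un) ?ltry.
apply/cvgrPdist_le => eta eta0; near=> n.
have un : u n <= eta%:E by near: n; exact: h.
have unf : u n \is a fin_num by rewrite ge0_fin_numE // (le_lt_trans un) ?ltry.
by rewrite /= sub0r normrN ger0_norm ?fine_ge0 // -lee_fin fineK.
Unshelve. all: by end_near.
Qed.

Lemma cvge0_lt {R : realType} (u : nat -> \bar R) : u @ \oo --> 0 ->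
  forall e : R, (0 < e)%R -> \forall n \near \oo, u n < e%:E.
Proof.
move/(@fine_cvgP _ _ _ _ u 0%R) => [uf uc] e e0; near=> n.
have : (`|0 - fine (u n)| < e)%R by near: n; apply: cvgr_dist_lt.
have ufn : u n \is a fin_num by near: n.
rewrite sub0r normrN => h; rewrite -(fineK ufn) lte_fin; apply: le_lt_trans h.
exact: ler_norm.
Unshelve. all: by end_near.
Qed.
Section Lf.
Context {R : realType} d (T : measurableType d) (mu : {measure set T -> \bar R}).

Lemma rearr_meas (D : set T) (f : T -> \bar R) :
  measurable_fun setT (rearr mu D f).
Proof. by apply: noninc_emeas => a b ab; exact: rearr_noninc. Qed.

Lemma distf_setT (f : T -> \bar R) (s : R) : (forall x, 0 <= f x) ->
  distf mu setT f s = mu [set x | s%:E < f x].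
Proof.
move=> f0; rewrite /distf setTI; congr (mu _).
by apply/seteqP; split => x /=; rewrite gee0_abs.
Qed.

Lemma ess_bound (f : T -> \bar R) : Mplus f -> rearr mu setT f 0 < +oo ->
  exists M : R, (0 <= M)%R /\ mu.-negligible [set x | M%:E < f x].
Proof.
move=> [mf f0] /rearr_lt [s [s0 ds _]]; exists s; split => //.
have maf : measurable_fun setT (abse \o f).
  exact: measurableT_comp (@abse_measurable R setT) mf.
exists (setT `&` [set x | s%:E < `|f x|]); split.
- exact: (emeasurable_fun_o_infty measurableT maf).
- by apply/eqP; rewrite -measure_le0.
- by move=> x /= h; split => //; rewrite gee0_abs.
Qed.

Lemma level_finite (f : T -> \bar R) (eps : R) : Mplus f -> (0 < eps)%R ->
  \int[@lebesgue_measure R]_(t in Rplus) rearr mu setT f t < +oo ->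
  mu [set x | eps%:E < f x] < +oo.
Proof.
move=> [mf f0] eps0 Ifin; rewrite ltNge leye_eq; apply/negP => /eqP Finf.
have Ige t : (0 <= t)%R -> eps%:E <= rearr mu setT f t.
  move=> t0; apply: le_ereal_inf_tmp => _ [s [s0 ds] <-].
  rewrite lee_fin leNgt; apply/negP => se.
  have := @distf_noninc R _ _ mu setT f s eps measurableT mf (ltW se).
  rewrite distf_setT // Finf => h.
  by move: (le_trans h ds); rewrite leye_eq.
have : \int[@lebesgue_measure R]_(t in Rplus) (cst eps%:E) t <=
       \int[@lebesgue_measure R]_(t in Rplus) rearr mu setT f t.
  apply: ge0_le_integral => //; try exact: measurable_Rplus;
    try exact: measurable_funTS (rearr_meas _ _);
    try (by move=> t _ /=; rewrite lee_fin ltW); by move=> t t0; exact: Ige.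
rewrite integral_cst; last exact: measurable_Rplus.
have hL : (@lebesgue_measure R) Rplus = +oo.
  rewrite RplusE; apply: eq_trans (lebesgue_measure_itv _) _ => /=.
  by rewrite ltry.
set L := (X in _ * X <= _); have -> : L = +oo by exact: hL.
rewrite mulry gtr0_sg ?mul1e // => h.
by move: (le_lt_trans h Ifin); rewrite ltxx.
Qed.

End Lf.
Section Lf2.
Context {R : realType} d (T : measurableType d) (mu : {measure set T -> \bar R}).

Lemma rearr_cut (f h : T -> \bar R) (eps t : R) : measurable_fun setT f ->
  measurable_fun setT h -> (0 <= eps)%R -> (0 <= t)%R ->
  (forall x, `|h x| <= `|f x|) -> (forall x, `|h x| <= eps%:E) ->
  rearr mu setT h t <= mine eps%:E (rearr mu setT f t).
Proof.
move=> mf mh eps0 t0 hf he; rewrite le_min; apply/andP; split.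
  apply: rearr_le_cst => //; rewrite /distf (_ : _ `&` _ = set0) ?measure0 ?lee_fin //.
  apply/seteqP; split => x // [_ /=] hx.
  by move: (lt_le_trans hx (he x)); rewrite ltxx.
apply: ereal_inf_le_tmp => _ [s [s0 ds] <-]; exists s => //; split => //.
apply: le_trans ds; apply: le_measure; rewrite ?inE.
- exact: (emeasurable_fun_o_infty measurableT (measurableT_comp (@abse_measurable R setT) mh)).
- exact: (emeasurable_fun_o_infty measurableT (measurableT_comp (@abse_measurable R setT) mf)).
by move=> x [_ /= hx]; split => //; exact: lt_le_trans hx (hf x).
Qed.

End Lf2.

Lemma dct_min {R : realType} (I : R -> \bar R) : measurable_fun setT I ->
  (forall t, 0 <= I t) -> \int[@lebesgue_measure R]_(t in Rplus) I t < +oo ->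
  (fun n => \int[@lebesgue_measure R]_(t in Rplus) mine (n.+1%:R^-1)%:E (I t))
    @ \oo --> 0.
Proof.
move=> mI I0 Ifin.
have mf_ n : measurable_fun Rplus (fun t => mine (n.+1%:R^-1)%:E (I t)).
  by apply: measurable_mine; [exact: measurable_cst|exact: measurable_funTS].
have ff : {ae @lebesgue_measure R, forall t, Rplus t ->
    (fun n => mine (n.+1%:R^-1)%:E (I t)) @ \oo --> cst 0 t}.
  apply: aeW => t _ /=; apply: cvge0_eps.
    by move=> n; rewrite le_min I0 lee_fin invr_ge0 ler0n.
  move=> eta eta0; near=> n; rewrite ge_min lee_fin; apply/orP; left.
  by apply: ltW; near: n; exact: (near_infty_natSinv_lt (PosNum eta0)).
have ig : (@lebesgue_measure R).-integrable Rplus I.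
  apply/integrableP; split; first exact: measurable_funTS.
  by under eq_integral do rewrite gee0_abs //.
have fg : {ae @lebesgue_measure R, forall t n, Rplus t ->
    `|mine (n.+1%:R^-1)%:E (I t)| <= I t}.
  by apply: aeW => t n _; rewrite gee0_abs ?le_min ?I0 ?lee_fin ?invr_ge0 ?ler0n // ge_min lexx orbT.
have [_ _] := @dominated_convergence _ _ R (@lebesgue_measure R) Rplus
  measurable_Rplus (fun n t => mine (n.+1%:R^-1)%:E (I t)) (cst 0) I mf_
  (measurable_cst _) ff ig fg.
by rewrite integral0.
Unshelve. all: by end_near.
Qed.
Lemma small_sets {R : realType} d (T : measurableType d)
  (mu : {measure set T -> \bar R})
  (N : (T -> \bar R) -> \bar R) (Nbar : (R -> \bar R) -> \bar R) :
  qBFN mu N -> ri mu N ->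
  ((nonatomic mu /\
      exists sigma : T -> R, meas_pres mu sigma /\ Nbar = Xbar_nonatomic mu N sigma) \/
   (exists (beta : R) (e : nat -> set T),
      atomic_enum mu beta e /\ Nbar = Xbar_atomic mu N beta e)) ->
  (exists f0 : R -> \bar R,
      measurable_fun Rplus f0 /\ Nbar f0 < +oo /\ rearrL f0 0 = +oo) ->
  forall eta : R, (0 < eta)%R -> exists2 delta : R, (0 < delta)%R &
   forall B, measurable B -> mu B < delta%:E ->
     N (fun x => (\1_B x)%:E) <= eta%:E.
Proof.
move=> hN hri [[_ [sigma [hsig ->]]]|[beta [e [hat _]]]] [f0 [mf0 [Nf0 f00]]].
  exact: nonatomic_small hN hri hsig mf0 Nf0 f00.
move=> eta eta0; exists beta; first by case: hat.
move=> B mB Bb; have B0 := @atomic_small R d T mu beta e hat B mB Bb.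
have [_ [_ [Nae _]]] := hN.
have -> : N (fun x => (\1_B x)%:E) = 0.
  apply/(Nae _ (@Mplus_indic R d T B mB)); exists B; split => // x /= hx.
  apply: contrapT => nBx; apply: hx; rewrite indicE.
  by rewrite memNset.
by rewrite lee_fin ltW.
Qed.
Theorem mainTheorem10 (R : realType) (d : measure_display) (T : measurableType d)
  (mu : {measure set T -> \bar R})
  (N : (T -> \bar R) -> \bar R) (Nbar : (R -> \bar R) -> \bar R) :
  sigma_finite setT mu ->
  qBFN mu N -> ri mu N ->
  (* resonant, and Nbar is the norm constructed in the context *)
  ((nonatomic mu /\
      exists sigma : T -> R, meas_pres mu sigma /\ Nbar = Xbar_nonatomic mu N sigma) \/
   (exists (beta : R) (e : nat -> set T),
      atomic_enum mu beta e /\ Nbar = Xbar_atomic mu N beta e)) ->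
  (* L^1 cap L^infty embeds continuously into X *)
  (exists C : R, (0 < C)%R /\ forall f, Mplus f -> N f <= C%:E * L1Linf mu f) ->
  (* some f0 in Xbar with f0^*(0) = oo *)
  (exists f0 : R -> \bar R,
      measurable_fun Rplus f0 /\ Nbar f0 < +oo /\ rearrL f0 0 = +oo) ->
  (* L^1 cap L^infty is contained in X_a *)
  forall f : T -> \bar R, Mplus f -> L1Linf mu f < +oo ->
    N f < +oo /\
    forall E : nat -> set T, (forall k, measurable (E k)) ->
      {ae mu, forall x, (fun k => \1_(E k) x : R) @ \oo --> 0%R} ->
      (fun k => N (fun x => f x * (\1_(E k) x)%:E)) @ \oo --> 0.
Proof.
move=> _ hN hri hcase [C [C0 hemb]] hf0 f Mf Lf.
have hsmall := @small_sets R d T mu N Nbar hN hri hcase hf0.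
have [N0 [NZ [Nae [[C1 [C11 Ntri]] [Nmono _]]]]] := hN.
have [mf f0] := Mf.
set I := rearr mu setT f.
have I00 : 0 <= I 0%R by exact: rearr_ge0.
have iI0 : 0 <= \int[@lebesgue_measure R]_(t in Rplus) I t.
  by apply: integral_ge0 => t _; exact: rearr_ge0.
have I0fin : I 0%R < +oo by apply: le_lt_trans Lf; exact: leeDl.
have iIfin : \int[@lebesgue_measure R]_(t in Rplus) I t < +oo.
  by apply: le_lt_trans Lf; exact: leeDr.
have Lfin : L1Linf mu f \is a fin_num by rewrite ge0_fin_numE // adde_ge0.
split.
  apply: le_lt_trans (hemb f Mf) _.
  by rewrite -(fineK Lfin) -EFinM ltry.
move=> E mE hE.
apply: cvge0_eps; first by move=> k; apply: N0; exact: Mplus_mulindic.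
move=> eta eta0.
have [M [M0 negM]] := @ess_bound R d T mu f Mf I0fin.
have C10 : (0 < C1)%R by lra.
pose e1 := (eta / (4 * C1 * C))%R.
have e10 : (0 < e1)%R.
  by apply: divr_gt0 => //; apply: mulr_gt0 => //; apply: mulr_gt0 => //; lra.
have : \forall n \near \oo, ((n.+1%:R^-1 < e1)%R /\
   \int[@lebesgue_measure R]_(t in Rplus) mine (n.+1%:R^-1)%:E (I t) < e1%:E).
  near=> n; split.
    near: n; exact: (near_infty_natSinv_lt (PosNum e10)).
  near: n; apply: cvge0_lt => //; apply: dct_min => //.
    exact: rearr_meas.
  by move=> t; exact: rearr_ge0.
move=> /filter_ex [n [hn1 hn2]].
set eps := (n.+1%:R^-1 : R)%R.
have eps0 : (0 < eps)%R by rewrite invr_gt0.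
set F := [set x | eps%:E < f x].
have mF : measurable F by rewrite -(setTI F); exact: emeasurable_fun_o_infty.
have Ffin : mu F < +oo := @level_finite R d T mu f eps Mf eps0 iIfin.
set h := fun x => f x * (\1_(~` F) x)%:E.
have Mh : Mplus h := @Mplus_mulindic R d T f (~` F) Mf (measurableC mF).
have hle x : `|h x| <= `|f x| /\ `|h x| <= eps%:E.
  rewrite /h indicE in_setC; case: (boolP (x \in F)) => xF /=.
    by rewrite mule0 abse0 abse_ge0 lee_fin ltW.
  rewrite mule1 lexx; split => //; rewrite gee0_abs // leNgt; apply/negP => h'.
  by move/negP: xF; apply; exact: mem_set.
have rh t : (0 <= t)%R -> rearr mu setT h t <= mine eps%:E (I t).
  move=> t0; apply: rearr_cut => //; try exact: Mh.1; try exact: (ltW eps0);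
    by move=> x; case: (hle x).
have Lh : L1Linf mu h <= (e1 + e1)%:E.
  rewrite /L1Linf EFinD; apply: leeD.
    apply: le_trans (rh 0%R (lexx _)) _; rewrite ge_min; apply/orP; left.
    by rewrite lee_fin ltW.
  apply: le_trans (ltW hn2); apply: ge0_le_integral => //;
    try exact: measurable_Rplus;
    try (by move=> t _; exact: rearr_ge0);
    try (by apply: measurable_funTS; exact: rearr_meas);
    try (by move=> t t0; exact: rh).
  apply: measurable_mine; first exact: measurable_cst.
  by apply: measurable_funTS; exact: rearr_meas.
have Nh : N h <= (C * (e1 + e1))%:E.
  apply: le_trans (hemb h Mh) _; rewrite EFinM; apply: lee_wpmul2l => //.
  by rewrite lee_fin ltW.
pose eta2 := (eta / (4 * C1 * (M + 1)))%R.
have eta20 : (0 < eta2)%R.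
  by apply: divr_gt0 => //; apply: mulr_gt0; [apply: mulr_gt0|]; lra.
have [delta delta0 hdelta] := hsmall eta2 eta20.
have muEF : (fun k => mu (E k `&` F)) @ \oo --> 0.
  have mf_ k : measurable_fun setT (fun x => (\1_(E k `&` F) x)%:E : \bar R).
    by apply/measurable_EFinP; apply: measurable_indic; exact: measurableI.
  have ff : {ae mu, forall x, setT x ->
      (fun k => ((\1_(E k `&` F) x)%:E : \bar R)) @ \oo --> cst 0 x}.
    case: hE => Z [mZ Z0 sZ]; exists Z; split => // x /= nP.
    apply: sZ => /= hx; apply: nP => _.
    apply: (@cvge0_eps R (fun k => (\1_(E k `&` F) x)%:E)).
      by move=> k; rewrite lee_fin.
    move=> e e0; near=> k.
    have : (`|0 - (\1_(E k) x : R)| < 1)%R.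
      by near: k; move/cvgrPdist_lt : hx => /(_ 1%R ltr01).
    rewrite !indicE in_setI; case: (x \in E k) => /=.
      by rewrite sub0r normrN normr1 ltxx.
    by move=> _; rewrite lee_fin ltW.
  have ig : mu.-integrable setT (fun x => ((\1_F x)%:E : \bar R)).
    apply/integrableP; split.
      by apply/measurable_EFinP; exact: measurable_indic.
    under eq_integral do rewrite abs_indicE.
    by rewrite integral_indic // setIT.
  have fg : {ae mu, forall x n, setT x ->
      `|(\1_(E n `&` F) x)%:E| <= ((\1_F x)%:E : \bar R)}.
    apply: aeW => x k _; rewrite abs_indicE lee_fin !indicE in_setI.
    by case: (x \in E k); case: (x \in F).
  have [_ _] := @dominated_convergence _ _ R mu setT measurableT
    (fun k x => (\1_(E k `&` F) x)%:E) (cst 0) (fun x => (\1_F x)%:E) mf_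
    (measurable_cst _) ff ig fg.
  rewrite integral0.
  have -> : (fun k => \int[mu]_(x in setT) (\1_(E k `&` F) x)%:E) =
            (fun k => mu (E k `&` F)).
    by apply/funext => k; rewrite integral_indic ?setIT //; exact: measurableI.
  by [].
near=> k.
have hk : mu (E k `&` F) < delta%:E by near: k; exact: cvge0_lt.
have mEF : measurable (E k `&` F) := measurableI _ _ (mE k) mF.
have MfEF : Mplus (fun x => f x * (\1_(E k `&` F) x)%:E) :=
  @Mplus_mulindic R d T f _ Mf mEF.
have N1 : N (fun x => f x * (\1_(E k `&` F) x)%:E) <= (M * eta2)%:E.
  have MM : Mplus (fun x => M%:E * (\1_(E k `&` F) x)%:E).
    apply: (@Mplus_mulindic R d T (fun _ => M%:E) _) => //.
  apply: le_trans (_ : _ <= N (fun x => M%:E * (\1_(E k `&` F) x)%:E)) _.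
    apply: Nmono => //.
    case: negM => Z [mZ Z0 sZ]; exists Z; split => // x /= hx; apply: sZ => /=.
    rewrite ltNge; apply/negP => fM; apply: hx; rewrite indicE.
    by case: (x \in _); rewrite ?mule1 ?mule0.
  rewrite NZ //; last exact: Mplus_indic.
  by rewrite EFinM; apply: lee_wpmul2l; [rewrite lee_fin|exact: hdelta].
have N2 : N (fun x => f x * (\1_(E k) x)%:E) <=
    C1%:E * ((M * eta2)%:E + (C * (e1 + e1))%:E).
  apply: le_trans (_ : _ <= N ((fun x => f x * (\1_(E k `&` F) x)%:E) \+ h)) _.
    apply: Nmono => //.
    - exact: Mplus_mulindic.
    - split; first by apply: emeasurable_funD; [exact: MfEF.1|exact: Mh.1].
      by move=> x; apply: adde_ge0; [exact: MfEF.2|exact: Mh.2].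
    apply: aeW => x /=; rewrite /h !indicE in_setI in_setC.
    case: (x \in E k); case: (x \in F) => /=; rewrite ?mule1 ?mule0 ?adde0 ?add0e //.
  have H := Ntri _ _ MfEF Mh.
  apply: le_trans H _.
  by apply: lee_wpmul2l; [rewrite lee_fin ltW|exact: leeD].
apply: le_trans N2 _; rewrite -EFinD -EFinM lee_fin.
have C1n : C1 != 0%R by rewrite gt_eqF.
have Cn : C != 0%R by rewrite gt_eqF.
have M1n : (M + 1)%R != 0%R by rewrite gt_eqF //; lra.
have h1 : (C1 * (M * eta2) <= eta / 4)%R.
  rewrite (_ : C1 * (M * eta2) = (M / (M + 1)) * (eta / 4))%R; last first.
    by rewrite /eta2; field; rewrite ?C1n ?M1n.
  rewrite ler_piMl //; first by apply: divr_ge0 => //; lra.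
  by rewrite ler_pdivrMr; lra.
have h2 : (C1 * (C * (e1 + e1)) = eta / 2)%R.
  by rewrite /e1; field; rewrite ?C1n ?Cn.
rewrite mulrDr h2; lra.
Unshelve. all: by end_near.
Qed.
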